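(* Let $n\ge4$, let $m=\lfloor n/2\rfloor$, and let $\pi=(m-1)^{m-1}(n-m)^{n-2m+2}(n-1)^{m-1}$ (exponents denote multiplicities). Then $\pi$ is graphical, $\pi\in\mathrm{BM}(\text{$1$-binding})$, but $\pi\notin\mathrm{BM}(\text{hamiltonian})$.
   Context: Graphs are finite and simple; a graphical sequence is a nondecreasing integer sequence that is the degree sequence of some graph (a realization). $\pi'\ge\pi$ means termwise $\ge$. A graphical sequence is forcibly $P$ if every realization has $P$; for increasing $P$, $\mathrm{BM}(P)$ is the set of graphical $\pi$ such that every graphical $\pi'\ge\pi$ of the same length is forcibly $P$. For $S\subseteq V(G)$ let $N(S)$ be the set of vertices adjacent to some vertex of $S$; with $\mathcal S=\{S\subseteq V(G): S\ne\emptyset,\ N(S)\ne V(G)\}$, the binding number is $\mathrm{bind}(G)=\min_{S\in\mathcal S}|N(S)|/|S|$ (and $\mathrm{bind}(K_n)=n-1$). $G$ is $b$-binding if $\mathrm{bind}(G)\ge b$. *)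

(* Defs.v *)
From HB Require Import structures.
From mathcomp Require Import all_boot all_order all_algebra.
Set Implicit Arguments. Unset Strict Implicit. Unset Printing Implicit Defensive.
Import Order.TTheory GRing.Theory Num.Theory.

Definition simple_graph (n : nat) (e : rel 'I_n) : Prop :=
  symmetric e /\ irreflexive e.

Definition deg (n : nat) (e : rel 'I_n) (x : 'I_n) : nat := #|[set y | e x y]|.

Definition degseq (n : nat) (e : rel 'I_n) : seq nat :=
  sort leq [seq deg e x | x <- enum 'I_n].

Definition realizes (n : nat) (e : rel 'I_n) (pi : seq nat) : Prop :=
  simple_graph e /\ degseq e = pi.

Definition graphical (n : nat) (pi : seq nat) : Prop :=
  exists e : rel 'I_n, realizes e pi.

Definition forcibly (n : nat) (P : rel 'I_n -> Prop) (pi : seq nat) : Prop :=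
  forall e : rel 'I_n, realizes e pi -> P e.

Definition seq_ge (pi' pi : seq nat) : bool := all2 leq pi pi'.

Definition BM (n : nat) (P : rel 'I_n -> Prop) (pi : seq nat) : Prop :=
  graphical n pi /\
  forall pi' : seq nat, graphical n pi' -> seq_ge pi' pi -> forcibly P pi'.

Definition nbhd (n : nat) (e : rel 'I_n) (S : {set 'I_n}) : {set 'I_n} :=
  [set y | [exists x in S, e x y]].

Definition bindfam (n : nat) (e : rel 'I_n) (S : {set 'I_n}) : bool :=
  (S != set0) && (nbhd e S != [set: 'I_n]).

(* binding number, a rational; n-1 when the family is empty (G = K_n) *)
Definition bind (n : nat) (e : rel 'I_n) : rat :=
  if [exists S, bindfam e S] then
    (\big[Num.min/(n.-1)%:R]_(S | bindfam e S) ((#|nbhd e S|)%:R / (#|S|)%:R))%R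
  else ((n.-1)%:R)%R.

Definition binding (b : rat) (n : nat) (e : rel 'I_n) : Prop := (b <= bind e)%R.

(* Hamiltonian: a cycle through all n vertices (n >= 3 in our use) *)
Definition hamiltonian (n : nat) (e : rel 'I_n) : Prop :=
  exists s : seq 'I_n, [/\ uniq s, size s = n & cycle e s].

Definition pi13 (n : nat) : seq nat :=
  let m := n./2 in
  nseq (m - 1) (m - 1) ++ nseq (n - 2 * m + 2) (n - m) ++ nseq (m - 1) (n - 1).

(* Main.v *)
Require Import Defs.
From mathcomp Require Import all_boot all_order all_algebra.
From mathcomp Require Import zify.
Import Order.TTheory GRing.Theory Num.Theory.
Set Implicit Arguments. Unset Strict Implicit.

Lemma card_count (T : finType) (P : pred T) : #|[set x | P x]| = count P (enum T).
Proof. rewrite enumT cardsE cardE /enum_mem size_filter. by apply: eq_count. Qed.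

Lemma card_iota n (p : pred nat) : #|[set y : 'I_n | p y]| = count p (iota 0 n).
Proof.
rewrite -val_enum_ord count_map cardsE cardE /enum_mem size_filter.
rewrite (@eq_filter _ _ predT) // filter_predT. by apply: eq_count.
Qed.

Lemma count_iota_all a b (p : pred nat) :
  (forall i, a <= i < a + b -> p i) -> count p (iota a b) = b.
Proof.
move=> H; apply/eqP; rewrite -{2}(size_iota a b) -all_count.
by apply/allP => i; rewrite mem_iota; apply: H.
Qed.

Lemma count_iota_none a b (p : pred nat) :
  (forall i, a <= i < a + b -> ~~ p i) -> count p (iota a b) = 0.
Proof.
move=> H; apply/eqP; rewrite eqn0Ngt -has_count.
by apply/hasPn => i; rewrite mem_iota; apply: H.
Qed.

Lemma count_iota_but x a b (p : pred nat) : a <= x < a + b ->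
  (forall i, a <= i < a + b -> p i = (i != x)) -> count p (iota a b) = b - 1.
Proof.
move=> hx H.
rewrite (@eq_in_count _ _ (predC (pred1 x))); last first.
  by move=> i; rewrite mem_iota => hi; rewrite H.
have := count_predC (pred1 x) (iota a b).
rewrite size_iota count_uniq_mem ?iota_uniq // mem_iota hx /=. lia.
Qed.

Lemma map_iota_const a b (f : nat -> nat) c :
  (forall i, a <= i < a + b -> f i = c) -> map f (iota a b) = nseq b c.
Proof.
move=> H; transitivity (map (fun=> c) (iota a b)).
  by apply/eq_in_map => i; rewrite mem_iota; apply: H.
rewrite -{2}(size_iota a b); elim: (iota a b) => //= y s ->. by [].
Qed.

Definition cls (n i : nat) : nat :=
  if i < n./2 - 1 then 0 else if i < n - n./2 + 1 then 1 else 2.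

Definition E (n i j : nat) : bool :=
  (i != j) && [|| cls n i == 2, cls n j == 2 | (cls n i == 1) && (cls n j == 1)].

Definition e13 (n : nat) : rel 'I_n := fun x y => E n x y.
Arguments e13 n : clear implicits.

Definition dval (n i : nat) : nat :=
  if cls n i == 0 then n./2 - 1 else if cls n i == 1 then n - n./2 else n - 1.

Lemma mfacts n : 4 <= n -> 2 <= n./2 /\ n./2 + n./2 <= n /\ n <= n./2 + n./2 + 1.
Proof. move=> h; have := odd_double_half n; rewrite -addnn; case: (odd n) => /=; lia. Qed.

Lemma clsB n i : i < n./2 - 1 -> cls n i = 0.
Proof. by rewrite /cls => ->. Qed.
Lemma clsC n i : n./2 - 1 <= i < n - n./2 + 1 -> cls n i = 1.
Proof. by rewrite /cls => /andP[h ->]; rewrite ltnNge h. Qed.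
Lemma clsA n i : n - n./2 + 1 <= i -> 4 <= n -> cls n i = 2.
Proof.
move=> h h4; have [h1 [h2 h3]] := mfacts h4.
rewrite /cls ifF ?ifF //; apply/negbTE; rewrite -leqNgt; lia.
Qed.

Lemma iota_split n : 4 <= n ->
  iota 0 n = iota 0 (n./2 - 1) ++ iota (n./2 - 1) (n - n./2 - n./2 + 2)
           ++ iota (n - n./2 + 1) (n./2 - 1).
Proof.
move=> h4; have [h1 [h2 h3]] := mfacts h4.
have e : n = (n./2 - 1) + ((n - n./2 - n./2 + 2) + (n./2 - 1)) by lia.
rewrite {1}e iotaD iotaD add0n. congr (_ ++ (iota _ _ ++ iota _ _)). lia.
Qed.

Ltac fin := rewrite /= ?orbT ?orbF ?andbT ?andbF //; try (apply/eqP; lia).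

Lemma deg_e13 n (x : 'I_n) : 4 <= n -> deg (e13 n) x = dval n x.
Proof.
move=> h4; have [h1 [h2 h3]] := mfacts h4.
rewrite /deg /e13 (@card_iota n (E n x)) (iota_split h4) !count_cat.
have xn := ltn_ord x.
rewrite /dval.
case: (ltnP x (n./2 - 1)) => hx1.
  rewrite clsB //=.
  rewrite count_iota_none; last first.
    move=> i hi; rewrite /E clsB ?(@clsB n i) //; fin.
  rewrite count_iota_none; last first.
    move=> i hi; rewrite /E clsB ?(@clsC n i) //; fin; lia.
  rewrite count_iota_all //.
  move=> i hi; rewrite /E clsB ?(@clsA n i) //; fin; lia.
case: (ltnP x (n - n./2 + 1)) => hx2.
  rewrite clsC ?hx1 //=.
  rewrite count_iota_none; last first.
    move=> i hi; rewrite /E clsC ?(@clsB n i) ?hx1 //; fin; lia.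
  rewrite (@count_iota_but x); first last.
  - move=> i hi; rewrite /E clsC ?(@clsC n i) ?hx1 //; fin; try lia.
  - lia.
  rewrite count_iota_all; first lia.
  move=> i hi; rewrite /E clsC ?(@clsA n i) ?hx1 //; fin; lia.
rewrite clsA //=.
rewrite count_iota_all; last first.
  move=> i hi; rewrite /E clsA //; fin.
rewrite count_iota_all; last first.
  move=> i hi; rewrite /E clsA //; fin.
rewrite (@count_iota_but x); first lia.
- lia.
- by move=> i hi; rewrite /E clsA //; fin; rewrite eq_sym.
Qed.

Lemma dval_homo n : 4 <= n -> {homo dval n : x y / x <= y}.
Proof.
move=> h4 x y le; have [h1 [h2 h3]] := mfacts h4.
rewrite /dval /cls.
case: (ltnP x (n./2 - 1)) => hx1; case: (ltnP y (n./2 - 1)) => hy1 //=;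
case: (ltnP x (n - n./2 + 1)) => hx2; case: (ltnP y (n - n./2 + 1)) => hy2 //=; lia.
Qed.

Lemma dval_pi13 n : 4 <= n -> map (dval n) (iota 0 n) = pi13 n.
Proof.
move=> h4; have [h1 [h2 h3]] := mfacts h4.
rewrite (iota_split h4) !map_cat /pi13.
have -> : n - 2 * n./2 + 2 = n - n./2 - n./2 + 2 by lia.
congr (_ ++ (_ ++ _)); apply: map_iota_const => i hi; rewrite /dval.
- by rewrite clsB //; lia.
- by rewrite clsC //; lia.
- by rewrite clsA //; lia.
Qed.

Lemma degseq_e13 n : 4 <= n -> degseq (e13 n) = pi13 n.
Proof.
move=> h4; rewrite /degseq.
have -> : [seq deg (e13 n) x | x <- enum 'I_n] = map (dval n) (iota 0 n).
  by rewrite -val_enum_ord -map_comp; apply: eq_map => x /=; rewrite deg_e13.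
rewrite sorted_sort ?dval_pi13 //.
  exact: leq_trans.
by rewrite -(dval_pi13 h4) (homo_sorted (dval_homo h4)) ?iota_sorted.
Qed.

Lemma realizes_e13 n : 4 <= n -> realizes (e13 n) (pi13 n).
Proof.
move=> h4; split; last exact: degseq_e13.
split.
- move=> x y; rewrite /e13 /E eq_sym; congr (_ && _).
  by case: (cls n x == 2); case: (cls n y == 2); rewrite //= andbC.
- by move=> x; rewrite /e13 /E eqxx.
Qed.

Lemma all2_refl_leq (s : seq nat) : all2 leq s s.
Proof. by elim: s => //= x s ->; rewrite leqnn. Qed.

Lemma count_all2 j (s t : seq nat) : all2 leq s t ->
  count (fun x => x < j) t <= count (fun x => x < j) s.
Proof.
elim: s t => [|x s IH] [|y t] //= /andP[xy st].
apply: leq_add; last exact: IH.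
by case: (ltnP y j) => //= hy; rewrite (leq_ltn_trans xy hy).
Qed.

Lemma count_pi13_lt n j : 4 <= n -> 0 < j <= n - n./2 ->
  count (fun x => x < j) (pi13 n) < j.
Proof.
move=> h4 /andP[j0 jm]; have [h1 [h2 h3]] := mfacts h4.
rewrite /pi13 !count_cat !count_nseq.
have -> : (n - n./2 < j) = false by apply/negbTE; rewrite -leqNgt.
have -> : (n - 1 < j) = false by apply/negbTE; rewrite -leqNgt; lia.
case: (ltnP (n./2 - 1) j) => h /=; lia.
Qed.

Lemma count_degseq n (e : rel 'I_n) j :
  count (fun x => x < j) (degseq e) = #|[set x | deg e x < j]|.
Proof. by rewrite /degseq count_sort count_map card_count. Qed.

Lemma key n (e : rel 'I_n) : 4 <= n -> simple_graph e ->
  all2 leq (pi13 n) (degseq e) ->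
  forall S : {set 'I_n}, S != set0 -> #|S| <= #|nbhd e S|.
Proof.
move=> h4 [sym irr] hge S S0; have [h1 [h2 h3]] := mfacts h4.
rewrite leqNgt; apply/negP => lt.
have sn : #|S| <= n by have := max_card S; rewrite card_ord.
have s0 : 0 < #|S| by rewrite card_gt0.
have c1 : #|S| <= #|[set x | deg e x < #|S|]|.
  apply: subset_leq_card; apply/subsetP => x xS; rewrite inE.
  apply: leq_ltn_trans lt; apply: subset_leq_card; apply/subsetP => y.
  by rewrite !inE => exy; apply/existsP; exists x; rewrite xS exy.
have c2 : n - #|S| + 1 <= #|[set x | deg e x < n - #|S| + 1]|.
  have hc := cardsC (nbhd e S); rewrite card_ord in hc.
  apply: (@leq_trans #|~: nbhd e S|); first lia.
  apply: subset_leq_card; apply/subsetP => t; rewrite !inE => tN.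
  have : deg e t <= #|~: S|.
    apply: subset_leq_card; apply/subsetP => y; rewrite !inE => ety.
    apply/negP => yS; move/negP: tN; apply; rewrite ?inE.
    by apply/existsP; exists y; rewrite yS sym.
  have := cardsC S; rewrite card_ord; lia.
have gen : forall j, 0 < j <= n - n./2 -> j <= #|[set x | deg e x < j]| -> False.
  move=> j hj hc.
  have := count_pi13_lt h4 hj; have := count_all2 j hge.
  rewrite count_degseq; lia.
case: (leqP #|S| (n - n./2)) => hs.
  by apply: (gen #|S|) => //; rewrite s0 hs.
by apply: (gen (n - #|S| + 1)) => //; apply/andP; split; lia.
Qed.

Lemma binding_pi13 n (e : rel 'I_n) : 4 <= n -> simple_graph e ->
  all2 leq (pi13 n) (degseq e) -> binding 1%R e.
Proof.
move=> h4 sg hge; rewrite /binding /bind.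
have n1 : (1 <= (n.-1)%:R :> rat)%R by rewrite ler1n; lia.
case: ifP => _ //.
apply: (big_ind (fun x : rat => 1 <= x)%R) => //.
  by move=> x y hx hy; rewrite Order.TotalTheory.le_min hx hy.
move=> S /andP[S0 _].
rewrite ler_pdivlMr ?ltr0n ?card_gt0 // mul1r ler_nat.
exact: key.
Qed.

Lemma fpath_closed (T : eqType) (f : T -> T) (P : pred T) x p :
  (forall y, P y -> P (f y)) -> P x -> fpath f x p -> all P p.
Proof.
move=> HP; elim: p x => //= y p IH x Px /andP[/eqP fx hp].
have Py : P y by rewrite -fx HP.
by rewrite Py (IH y).
Qed.

Lemma card_cls n k : 4 <= n -> (k == 0) || (k == 2) ->
  #|[set y : 'I_n | cls n y == k]| = n./2 - 1.
Proof.
move=> h4 hk; have [h1 [h2 h3]] := mfacts h4.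
rewrite (@card_iota n (fun i => cls n i == k)) (iota_split h4) !count_cat.
have [-> | k0] := eqVneq k 0.
  rewrite count_iota_all; last by move=> i hi; rewrite clsB //; lia.
  rewrite count_iota_none; last by move=> i hi; rewrite clsC //; lia.
  rewrite count_iota_none; last by move=> i hi; rewrite clsA //; lia.
  lia.
have [-> | k2] := eqVneq k 2.
  rewrite count_iota_none; last by move=> i hi; rewrite clsB //; lia.
  rewrite count_iota_none; last by move=> i hi; rewrite clsC //; lia.
  rewrite count_iota_all; last by move=> i hi; rewrite clsA //; lia.
  lia.
by move: hk; rewrite (negbTE k0) (negbTE k2).
Qed.

Lemma not_ham n : 4 <= n -> ~ hamiltonian (e13 n).
Proof.
move=> h4 [s [us ss cs]]; have [h1 [h2 h3]] := mfacts h4.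
have alls : forall x : 'I_n, x \in s.
  move=> x; apply/negPn/negP => xs.
  have : #|s| <= #|predC1 x|.
    apply: subset_leq_card; apply/subsetP => y ys; rewrite !inE.
    by apply/eqP => yx; move: xs; rewrite -yx ys.
  rewrite (card_uniqP us) ss; have := cardC1 x; rewrite card_ord => e1 hle.
  have : n <= n.-1 by rewrite -e1; exact: hle.
  lia.
have hm1 : n./2 - 1 < n by lia.
pose c := Ordinal hm1.
have cC : cls n c = 1 by rewrite clsC //=; lia.
have hn1 : n - 1 < n by lia.
pose a := Ordinal hn1.
have aA : cls n a = 2 by rewrite clsA //=; lia.
case: (rot_to (alls c)) => i r hr.
have ut : uniq (c :: r) by rewrite -hr rot_uniq.
have ct : cycle (e13 n) (c :: r) by rewrite -hr rot_cycle.
have allt : forall x, x \in c :: r by move=> x; rewrite -hr mem_rot.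
pose f := next (c :: r).
have ef : forall x, e13 n x (f x) := fun x => next_cycle ct (allt x).
have finj : injective f := can_inj (prev_next ut).
have fB : forall y : 'I_n, cls n y = 0 -> cls n (f y) = 2.
  move=> y hy; have := ef y; rewrite /e13 /E hy /=.
  by case/andP => _; rewrite orbF => /eqP.
case: (boolP [exists x : 'I_n, (cls n x == 1) && (cls n (f x) == 2)]).
  case/existsP => x /andP[/eqP xC /eqP fxA].
  have : #|f @: (x |: [set y : 'I_n | cls n y == 0])| <= #|[set y : 'I_n | cls n y == 2]|.
    apply: subset_leq_card; apply/subsetP => z /imsetP[y]; rewrite !inE.
    by case/orP => [/eqP -> | /eqP hy] ->; apply/eqP; [exact: fxA | exact: fB].
  rewrite (card_imset _ finj) cardsU1 !card_cls // inE xC /=; lia.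
move=> hno.
have closed : forall y : 'I_n, cls n y == 1 -> cls n (f y) == 1.
  move=> y /eqP hy; have := ef y; rewrite /e13 /E hy /=.
  case/andP => _ /orP[h|h] //.
  by exfalso; move/negP: hno; apply; apply/existsP; exists y; rewrite hy h.
have hp := cycle_next ut.
have := fpath_closed closed (introT eqP cC) hp.
rewrite all_rcons => /andP[_ /allP hr'].
have : a \in r.
  have := allt a; rewrite inE => /orP[/eqP ac|//].
  by have := congr1 val ac => /=; lia.
by move/hr'; rewrite /= aA.
Qed.

Theorem mainTheorem13 (n : nat) (hn : 4 <= n) :
  [/\ graphical n (pi13 n),
      BM (@binding 1%R n) (pi13 n)
    & ~ BM (@hamiltonian n) (pi13 n)].
Proof.
split.
- by exists (e13 n); exact: realizes_e13.
- split; first by exists (e13 n); exact: realizes_e13.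
  move=> pi' _ hge e' [sg deq]; apply: binding_pi13 => //; by rewrite deq.
- case=> _ H; apply: (not_ham hn); apply: (H (pi13 n)).
  + by exists (e13 n); exact: realizes_e13.
  + exact: all2_refl_leq.
  + exact: realizes_e13.
Qed.
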